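(* Let $v\in\mathcal{K}\setminus\mathcal{Y}_{\mu_1}$ and $w\in C_v^+\cap\mathcal{K}$ with $w\ne v$. Then $f_0$ decreases along the segment from $w$ to $v$: the function $t\mapsto f_0(w+t(v-w))$ is strictly decreasing on $[0,1]$.
   Context: $\mathcal{K}\subset\mathbb{R}^q$ is an open, bounded, convex set with $0\in\mathcal{K}$. $f:\mathcal{K}\to\mathbb{R}$ is $C^2$ with $D^2f\ge -MI_q$ ($M\ge0$) and $f(v)\to\infty$ as $v\to\partial\mathcal{K}$, $v\in\mathcal{K}$; set $f_0(v)=f(v)+\frac M2|v|^2$ (convex on $\mathcal{K}$). Let $g:\mathbb{S}^{q-1}\to(0,\infty)$ be the Lipschitz function such that $\nu\mapsto g(\nu)\nu$ parametrizes $\partial\mathcal{K}$. Define $G(x)=g(x/|x|)x$ for $x\ne0$, $G(0)=0$, on $\overline{B_1(0)}$, and $\mathcal{Y}_\mu=G(B_\mu(0))$ for $0<\mu<1$. Fix $r_0>0$ and $0<\mu_0<1$ with $\overline{B_{r_0}(0)}\subset\mathcal{Y}_{\mu_0}$. Let $s_0=\max\{f_0(v):v\in\partial B_{r_0}(0)\}$ and fix $\mu_1\in(\mu_0,1)$ such that $f_0(v)\ge 1+s_0$ for all $v\in\mathcal{K}\setminus\mathcal{Y}_{\mu_1}$. Cones: for $v\in\mathcal{K}\setminus\overline{B_{r_0}(0)}$, $C_v^-$ is the closed (solid) half-cone with vertex $v$, axis the ray from $v$ through $0$, and half-aperture $\alpha(v)\in(0,\pi/2)$ with $\sin\alpha(v)=r_0/|v|$;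 $C_v^+=\{v+\xi:\ v-\xi\in C_v^-\}$ is its reflection through $v$. *)

(* Defs.v *)
From HB Require Import structures.
From mathcomp Require Import all_boot all_order all_algebra.
From mathcomp Require Import all_classical all_reals all_analysis.
Set Implicit Arguments. Unset Strict Implicit. Unset Printing Implicit Defensive.
Import Order.TTheory GRing.Theory Num.Theory.
Import numFieldNormedType.Exports.
Local Open Scope classical_set_scope.
Local Open Scope ring_scope.

Section Defs.
Variables (R : realType) (q : nat).
Notation V := 'rV[R]_q.

Definition dotq (u w : V) : R := \sum_(i < q) u ord0 i * w ord0 i.
Definition enorm (u : V) : R := Num.sqrt (dotq u u).

Definition eopen (K : set V) : Prop :=
  forall x, K x -> exists2 e : R, 0 < e & forall y, enorm (y - x) < e -> K y.
Definition ebounded (K : set V) : Prop :=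
  exists C : R, forall x, K x -> enorm x <= C.
Definition econvex (K : set V) : Prop :=
  forall x y (t : R), K x -> K y -> 0 <= t <= 1 -> K ((1 - t) *: x + t *: y).

(* topological boundary of K (closure minus interior; K is open) *)
Definition ebdry (K : set V) : set V :=
  [set p | ~ K p /\ forall e : R, 0 < e -> exists x, K x /\ enorm (x - p) < e].

Definition blows_up_at_bdry (K : set V) (f : V -> R) : Prop :=
  forall p, ebdry K p -> forall B : R, exists2 d : R, 0 < d &
    forall v, K v -> enorm (v - p) < d -> B < f v.

Definition C2_on (K : set V) (f : V -> R) : Prop :=
  forall x, K x ->
    {for x, continuous f} /\
    forall e1 e2 : V,
      derivable f x e1 /\ {for x, continuous ('D_e1 f)} /\
      derivable ('D_e1 f) x e2 /\ {for x, continuous ('D_e2 ('D_e1 f))}.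

(* D^2 f >= - M I on K:  <D^2 f(x) e, e> >= - M |e|^2 *)
Definition hess_ge (K : set V) (f : V -> R) (M : R) : Prop :=
  forall x, K x -> forall e : V, - M * enorm e ^+ 2 <= 'D_e ('D_e f) x.

Definition f0 (f : V -> R) (M : R) (v : V) : R := f v + M / 2 * enorm v ^+ 2.

Definition sphere1 : set V := [set nu | enorm nu = 1].

Definition radial_param (K : set V) (g : V -> R) : Prop :=
  (forall nu, sphere1 nu -> 0 < g nu) /\
  (exists L : R, forall nu1 nu2, sphere1 nu1 -> sphere1 nu2 ->
      `|g nu1 - g nu2| <= L * enorm (nu1 - nu2)) /\
  ebdry K = [set g nu *: nu | nu in sphere1].

Definition Gmap (g : V -> R) (x : V) : V :=
  if x == 0 then 0 else g ((enorm x)^-1 *: x) *: x.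

Definition Yset (g : V -> R) (mu : R) : set V :=
  [set Gmap g x | x in [set x | enorm x < mu]].

(* C_v^- : closed solid half-cone, vertex v, axis the ray from v through 0,
   half-aperture alpha with sin alpha = r0/|v|, i.e.
   cos alpha = sqrt(1 - (r0/|v|)^2);  x in C_v^- iff x = v or the angle
   between x - v and -v is <= alpha. *)
Definition cone_minus (r0 : R) (v : V) : set V :=
  [set x | enorm (x - v) * enorm v * Num.sqrt (1 - (r0 / enorm v) ^+ 2)
             <= dotq (x - v) (- v)].

Definition cone_plus (r0 : R) (v : V) : set V :=
  [set w | cone_minus r0 v (v - (w - v))].

End Defs.

(* Main.v *)
Require Import Defs.
From HB Require Import structures.
From mathcomp Require Import all_boot all_order all_algebra.
From mathcomp Require Import all_classical all_reals all_analysis.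
From mathcomp Require Import ring lra.
Import Order.TTheory GRing.Theory Num.Theory.
Import numFieldNormedType.Exports.
Local Open Scope classical_set_scope.
Local Open Scope ring_scope.

Section L.
Variables (R : realType) (q : nat).
Notation V := 'rV[R]_q.
Implicit Types (x y z : V).

Lemma dotqC x y : dotq x y = dotq y x.
Proof. by rewrite /dotq; apply: eq_bigr => i _; rewrite mulrC. Qed.
Lemma dotqDl x y z : dotq (x + y) z = dotq x z + dotq y z.
Proof. by rewrite /dotq -big_split; apply: eq_bigr => i _; rewrite mxE mulrDl. Qed.
Lemma dotqZl (c : R) x y : dotq (c *: x) y = c * dotq x y.
Proof. by rewrite /dotq mulr_sumr; apply: eq_bigr => i _; rewrite mxE mulrA. Qed.
Lemma dotqNl x y : dotq (- x) y = - dotq x y.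
Proof. by rewrite -scaleN1r dotqZl mulN1r. Qed.
Lemma dotqBl x y z : dotq (x - y) z = dotq x z - dotq y z.
Proof. by rewrite dotqDl dotqNl. Qed.
Lemma dotqDr x y z : dotq z (x + y) = dotq z x + dotq z y.
Proof. by rewrite dotqC dotqDl !(dotqC z). Qed.
Lemma dotqZr (c : R) x y : dotq y (c *: x) = c * dotq y x.
Proof. by rewrite dotqC dotqZl dotqC. Qed.
Lemma dotqNr x y : dotq y (- x) = - dotq y x.
Proof. by rewrite dotqC dotqNl dotqC. Qed.
Lemma dotqBr x y z : dotq z (x - y) = dotq z x - dotq z y.
Proof. by rewrite dotqDr dotqNr. Qed.
Lemma dotq_ge0 x : 0 <= dotq x x.
Proof. by apply: sumr_ge0 => i _; rewrite -expr2 sqr_ge0. Qed.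
Lemma dotq_eq0 x : dotq x x = 0 -> x = 0.
Proof.
move=> /eqP; rewrite psumr_eq0; last by move=> i _; rewrite -expr2 sqr_ge0.
move=> /allP H; apply/matrixP => i j; rewrite mxE (ord1 i).
by have /(_ (mem_index_enum j)) := H j; rewrite -expr2 sqrf_eq0 => /eqP.
Qed.
Lemma enorm_ge0 x : 0 <= enorm x.
Proof. exact: sqrtr_ge0. Qed.
Lemma enorm_sq x : enorm x ^+ 2 = dotq x x.
Proof. by rewrite sqr_sqrtr // dotq_ge0. Qed.
Lemma enormZ (c : R) x : enorm (c *: x) = `|c| * enorm x.
Proof. by rewrite /enorm dotqZl dotqZr mulrA -expr2 sqrtrM ?sqr_ge0 // sqrtr_sqr. Qed.
Lemma enormN x : enorm (- x) = enorm x.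
Proof. by rewrite -scaleN1r enormZ normrN normr1 mul1r. Qed.
Lemma enormB x y : enorm (x - y) = enorm (y - x).
Proof. by rewrite -enormN opprB. Qed.

Lemma line_fun_eq (F : V -> R) x0 d (t : R) :
  (fun h : R => h^-1 *: (((fun s : R => F (x0 + s *: d)) \o shift t) (h *: 1) -
       F (x0 + t *: d))) =
  (fun h : R => h^-1 *: ((F \o shift (x0 + t *: d)) (h *: d) - F (x0 + t *: d))).
Proof.
apply/funext => h /=; congr (_ *: (F _ - _)).
by rewrite [h *: 1]mulr1 scalerDl addrCA addrC.
Qed.
Lemma line_derive (F : V -> R) x0 d (t : R) :
  derive (fun s : R => F (x0 + s *: d)) t 1 = derive F (x0 + t *: d) d.
Proof. by rewrite /derive line_fun_eq. Qed.
Lemma line_derivable (F : V -> R) x0 d (t : R) :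
  derivable (fun s : R => F (x0 + s *: d)) t 1 = derivable F (x0 + t *: d) d.
Proof. by rewrite /derivable line_fun_eq. Qed.
Lemma enorm_eq0 x : enorm x = 0 -> x = 0.
Proof. by move=> h; apply: dotq_eq0; rewrite -enorm_sq h expr0n. Qed.

Lemma Y_in_K (K : set V) g (mu : R) : eopen K -> econvex K -> K 0 ->
  radial_param K g -> mu <= 1 -> Yset g mu `<=` K.
Proof.
move=> Ko Kc K0 [gpos [_ Hb]] mu1 y [x /= xmu <-].
rewrite /Gmap; case: eqP => [_|/eqP x0]; first done.
set l := enorm x.
have l0 : 0 < l.
  rewrite lt_neqAle enorm_ge0 andbT eq_sym; apply/negP => /eqP => /enorm_eq0 h; move: x0; rewrite h eqxx.
  by [].
have l1 : l < 1 by apply: lt_le_trans mu1.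
set nu := l^-1 *: x.
have snu : sphere1 nu.
  by rewrite /sphere1 /= /nu enormZ -/l ger0_norm ?invr_ge0 ?ltW // mulVf // gt_eqF.
have bp : ebdry K (g nu *: nu) by rewrite Hb; exists nu.
case: bp => _ Hcl.
have [rho rho0 Hrho] := Ko 0 K0.
have e0 : 0 < rho * (1 - l) / l by rewrite divr_gt0 // mulr_gt0 // subr_gt0.
have [z [Kz zp]] := Hcl _ e0.
set m := (l / (1 - l)) *: (g nu *: nu - z).
have Km : K m.
  apply: Hrho; rewrite subr0 /m enormZ ger0_norm; last first.
    by rewrite divr_ge0 // ?ltW // subr_gt0.
  rewrite enormB.
  have h1 : 0 < 1 - l by rewrite subr_gt0.
  rewrite -(ltr_pM2l (_ : 0 < (1 - l) / l)); last by rewrite divr_gt0.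
  rewrite mulrA (_ : (1 - l) / l * (l / (1 - l)) = 1) ?mul1r; last by field; rewrite ?gt_eqF.
  by rewrite mulrC mulrA.
have := Kc m z l Km Kz; rewrite ltW ?enorm_ge0 ?ltW //= => /(_ isT).
suff -> : (1 - l) *: m + l *: z = g nu *: x by [].
rewrite /m scalerA (_ : (1 - l) * (l / (1 - l)) = l); last first.
  by field; rewrite subr_eq0 eq_sym lt_eqF.
rewrite scalerBr subrK /nu !scalerA; congr (_ *: x); by field; rewrite gt_eqF.
Qed.
Lemma poly_der (a b c M t : R) :
  is_derive t 1 (fun s : R => M / 2 * (a + 2 * b * s + c * s ^+ 2)) (M * b + M * c * t).
Proof.
pose p : {poly R} := (M / 2 * a)%:P + (M * b) *: 'X + (M / 2 * c) *: 'X^2.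
have -> : (fun s : R => M / 2 * (a + 2 * b * s + c * s ^+ 2)) = horner p.
  apply/funext => s; rewrite /p !hornerE /=; by field.
apply: (is_derive_eq (is_derive_poly p t)).
change ((@poly.deriv _ p).[t] = M * b + M * c * t); rewrite /p !poly.derivE !hornerE /=; by field.
Qed.
Lemma lin_der (k t : R) : is_derive t 1 (fun s : R => k * s) k.
Proof.
have -> : (fun s : R => k * s) = (fun s : R => 1 / 2 * (0 + 2 * k * s + 0 * s ^+ 2)).
  by apply/funext => s; field.
by apply: (is_derive_eq (poly_der 0 k 0 1 t)); rewrite !mul1r mul0r addr0.
Qed.
End L.
Arguments dotqC {R q}.
Arguments dotqDl {R q}.
Arguments dotqZl {R q}.
Arguments dotqNl {R q}.
Arguments dotqBl {R q}.
Arguments dotqDr {R q}.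
Arguments dotqZr {R q}.
Arguments dotqNr {R q}.
Arguments dotqBr {R q}.
Arguments dotq_ge0 {R q}.
Arguments dotq_eq0 {R q}.
Arguments enorm_ge0 {R q}.
Arguments enorm_sq {R q}.
Arguments enormZ {R q}.
Arguments enormN {R q}.
Arguments enormB {R q}.
Arguments line_fun_eq {R q}.
Arguments line_derive {R q}.
Arguments line_derivable {R q}.
Arguments enorm_eq0 {R q}.
Arguments Y_in_K {R q}.
Arguments poly_der {R}.
Arguments lin_der {R}.

Theorem corollary2p5 (R : realType) (q : nat)
  (K : set 'rV[R]_q) (f : 'rV[R]_q -> R) (M : R) (g : 'rV[R]_q -> R)
  (r0 mu0 mu1 s0 : R) (v w : 'rV[R]_q) :
  eopen K -> ebounded K -> econvex K -> K 0 ->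
  C2_on K f -> 0 <= M -> hess_ge K f M -> blows_up_at_bdry K f ->
  radial_param K g ->
  0 < r0 -> 0 < mu0 < 1 ->
  [set x | enorm x <= r0] `<=` Yset g mu0 ->
  (exists2 u, enorm u = r0 & f0 f M u = s0) ->
  (forall u, enorm u = r0 -> f0 f M u <= s0) ->
  mu0 < mu1 < 1 ->
  (forall u, K u -> ~ Yset g mu1 u -> 1 + s0 <= f0 f M u) ->
  K v -> ~ Yset g mu1 v ->
  cone_plus r0 v w -> K w -> w != v ->
  forall s t : R, 0 <= s -> s < t -> t <= 1 ->
    f0 f M (w + t *: (v - w)) < f0 f M (w + s *: (v - w)).
Proof.
move=> Ko Kb Kc K0 C2 M0 Hh Hbl Hrad r00 /andP[mu00 mu01] Hball _ Hs0
  /andP[mu01' mu11] Hout Kv nYv cone Kw wv s t s0' st t1.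
set d := v - w.
have d0 : d != 0 by rewrite /d subr_eq0 eq_sym.
have ballK : forall x, enorm x <= r0 -> K x.
  move=> x hx; apply: (Y_in_K K g mu0 Ko Kc K0 Hrad (ltW mu01)); exact: Hball.
have vr : r0 < enorm v.
  rewrite ltNge; apply/negP => hv; apply: nYv.
  have [x xm <-] := Hball v hv; exists x => //=; exact: lt_trans xm mu01'.
have ev : v - (w - v) - v = d by rewrite /d addrAC subrr add0r opprB.
move: cone; rewrite /cone_plus /cone_minus /= ev dotqNr (dotqC d) => cone.
have C0 : 0 < dotq d d.
  rewrite lt_neqAle dotq_ge0 andbT eq_sym; apply/negP => /eqP /dotq_eq0 h.
  by move: d0; rewrite h eqxx.
have A0 : r0 ^+ 2 < dotq v v.
  have := enorm_sq v; have := enorm_ge0 v; nra.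
have q1 : 0 <= 1 - (r0 / enorm v) ^+ 2.
  rewrite subr_ge0; apply: exprn_ile1; first exact: divr_ge0 (ltW r00) (enorm_ge0 v).
  by rewrite ler_pdivrMr ?mul1r ?ltW // (lt_trans r00 vr).
set P := enorm d * enorm v * Num.sqrt (1 - (r0 / enorm v) ^+ 2).
have P2 : P ^+ 2 = dotq d d * (dotq v v - r0 ^+ 2).
  rewrite /P exprMn (sqr_sqrtr q1) !exprMn !enorm_sq exprVn enorm_sq.
  field; rewrite gt_eqF //; apply: le_lt_trans A0; exact: sqr_ge0.
have P0 : 0 <= P by rewrite /P !mulr_ge0 ?enorm_ge0 ?sqrtr_ge0.
move: P2 P0 cone; set A := dotq v v; set B := dotq v d; set C := dotq d d.
move=> P2 P0 cone.
have {}C0 : 0 < C by exact: C0.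
have {}A0 : r0 ^+ 2 < A by exact: A0.
set Dd := C * (A - r0 ^+ 2).
have {}P2 : P ^+ 2 = Dd by exact: P2.
have {}cone : P <= - B by exact: cone.
have D0 : 0 < Dd by rewrite /Dd mulr_gt0 // subr_gt0.
have Pp : 0 < P.
  rewrite lt_neqAle P0 andbT; apply/negP => /eqP Pe; move: P2 D0; rewrite -Pe expr0n /= => <-; by rewrite ltxx.
have disc : 0 <= B ^+ 2 - Dd by nra.
set S := Num.sqrt (B ^+ 2 - Dd).
have S2 : S ^+ 2 = B ^+ 2 - Dd by rewrite sqr_sqrtr.
have S0 : 0 <= S by exact: sqrtr_ge0.
have BS : 0 < - B - S by nra.
set s1 := (- B - S) / C.
have s1p : 0 < s1 by rewrite divr_gt0.
have Cs : C * s1 = - B - S by rewrite /s1 mulrC divfK // gt_eqF.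
have quad : C * s1 ^+ 2 + 2 * B * s1 + (A - r0 ^+ 2) = 0.
  have : C * (C * s1 ^+ 2 + 2 * B * s1 + (A - r0 ^+ 2)) = 0.
    have -> : C * (C * s1 ^+ 2 + 2 * B * s1 + (A - r0 ^+ 2)) =
       (C * s1) ^+ 2 + 2 * B * (C * s1) + Dd by rewrite /Dd; ring.
    rewrite Cs; nra.
  by move/eqP; rewrite mulf_eq0 (gt_eqF C0) /= => /eqP.
set T := 1 + s1.
set u := w + T *: d.
have uv : u = v + s1 *: d.
  by rewrite /u /T scalerDl scale1r addrA (addrC w (v - w)) subrK.
have eu : enorm u = r0.
  have : enorm u ^+ 2 = r0 ^+ 2.
    rewrite enorm_sq uv dotqDl !dotqDr !dotqZl !dotqZr (dotqC d v) -/A -/B -/C.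
    nra.
  move/eqP; rewrite eqrXn2 ?enorm_ge0 ?ltW // => /eqP //.
have Ku : K u by apply: ballK; rewrite eu.
have fu : f0 f M u <= s0 by apply: Hs0.
have fv : 1 + s0 <= f0 f M v by apply: Hout.
have T1 : 1 < T by rewrite /T ltrDl.
have T0 : 0 < T by apply: lt_trans T1.
have Kseg : forall r, 0 <= r <= T -> K (w + r *: d).
  move=> r /andP[r0' rT].
  have hr : 0 <= r / T <= 1 by rewrite divr_ge0 ?(ltW T0) //= ler_pdivrMr // mul1r.
  have := Kc w u (r / T) Kw Ku hr.
  suff -> : (1 - r / T) *: w + r / T *: u = w + r *: d by [].
  by rewrite /u scalerDr scalerA divfK ?gt_eqF // addrA -scalerDl subrK scale1r.
set a := dotq w w; set b := dotq w d.
pose psi := fun r : R => f0 f M (w + r *: d).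
have psiE : psi = (fun r => f (w + r *: d)) + (fun r => M / 2 * (a + 2 * b * r + C * r ^+ 2)).
  apply/funext => r; rewrite /psi /f0 /= enorm_sq dotqDl !dotqDr !dotqZl !dotqZr (dotqC d w).
  rewrite -/a -/b -/C; congr (_ + _ * _); ring.
pose D1 := fun r : R => 'D_d f (w + r *: d).
pose D2 := fun r : R => 'D_d ('D_d f) (w + r *: d).
have dpsi : forall r, 0 <= r <= T -> is_derive r 1 psi (D1 r + (M * b + M * C * r)).
  move=> r hr; have [_ /(_ d d) [df [_ [_ _]]]] := C2 _ (Kseg r hr).
  rewrite psiE; apply: is_deriveD; last exact: poly_der.
  by apply: DeriveDef; [rewrite line_derivable|rewrite line_derive].
pose h := fun r : R => D1 r + M * C * r.
have dh : forall r, 0 <= r <= T -> is_derive r 1 h (D2 r + M * C).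
  move=> r hr; have [_ /(_ d d) [_ [_ [ddf _]]]] := C2 _ (Kseg r hr).
  have -> : h = (fun r => D1 r) + (fun r => M * C * r) by [].
  apply: is_deriveD; last exact: lin_der.
  apply: DeriveDef; first by rewrite /D1 (line_derivable (fun c => derive f c d)).
  by rewrite /D1 /D2 (line_derive (fun c => derive f c d)).
have D2ge : forall r, 0 <= r <= T -> 0 <= D2 r + M * C.
  move=> r hr; have := Hh _ (Kseg r hr) d; rewrite enorm_sq -/C /D2; lra.
have hmono : forall x1 x2, 0 <= x1 -> x1 <= x2 -> x2 <= T -> h x1 <= h x2.
  move=> x1 x2 x10 x12 x2T.
  have inI : forall z, x1 <= z <= x2 -> 0 <= z <= T.
    move=> z /andP[z1 z2]; apply/andP; split; [exact: le_trans z1|exact: le_trans x2T].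
  have [c hc E] : exists2 c, c \in `[x1, x2] & h x2 - h x1 = (D2 c + M * C) * (x2 - x1).
    apply: MVT_segment => //.
      move=> z; rewrite in_itv /= => /andP[z1 z2]; apply: dh; apply: inI.
      by rewrite !ltW.
    apply: derivable_within_continuous => z; rewrite in_itv /= => hz.
    by have [hd _] := dh z (inI z hz).
  move: hc; rewrite in_itv /= => hc.
  by rewrite -subr_ge0 E mulr_ge0 ?subr_ge0 // D2ge // inI.
have psider : forall a1 a2, 0 <= a1 -> a1 <= a2 -> a2 <= T ->
    exists2 c, a1 <= c <= a2 & psi a2 - psi a1 = (h c + M * b) * (a2 - a1).
  move=> a1 a2 a10 a12 a2T.
  have inI : forall z, a1 <= z <= a2 -> 0 <= z <= T.
    move=> z /andP[z1 z2]; apply/andP; split; [exact: le_trans z1|exact: le_trans a2T].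
  have [c hc E] : exists2 c, c \in `[a1, a2] &
      psi a2 - psi a1 = (D1 c + (M * b + M * C * c)) * (a2 - a1).
    apply: (MVT_segment (df := fun r => D1 r + (M * b + M * C * r))) => //.
      move=> z; rewrite in_itv /= => /andP[z1 z2]; apply: dpsi; apply: inI.
      by rewrite !ltW.
    apply: derivable_within_continuous => z; rewrite in_itv /= => hz.
    by have [hd _] := dpsi z (inI z hz).
  move: hc; rewrite in_itv /= => hc; exists c => //.
  by rewrite E /h; congr (_ * _); lra.
have psi1 : psi 1 = f0 f M v by rewrite /psi scale1r /d addrC subrK.
have psiT : psi T = f0 f M u by [].
have [c1 /andP[c11 c1T] E1] := psider 1 T ler01 (ltW T1) (lexx T).
have hc1 : h c1 + M * b < 0.
  have : (h c1 + M * b) * (T - 1) < 0 by rewrite -E1 psi1 psiT; lra.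
  by rewrite pmulr_llt0 // subr_gt0.
have [xi /andP[xis xit] E2] := psider s t s0' (ltW st) (le_trans t1 (ltW T1)).
have hle : h xi <= h c1.
  apply: hmono; [exact: le_trans xis|exact: le_trans xit (le_trans t1 c11)|exact: c1T].
have : psi t - psi s < 0.
  by rewrite E2 pmulr_llt0 ?subr_gt0 //; lra.
rewrite /psi; lra.
Qed.
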